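(* $(\textbf{W}, \nabla_{\sqcup\!\sqcup}, \iota_{\sqcup\!\sqcup}, \Delta_\odot, \epsilon_\odot)$ is a graded bialgebra, but not a Hopf algebra.
   Context: Let $\Bbbk$ be a field. A word is a finite sequence of positive integers; $\ell(w)$ is its length and $\max(w)$ its largest letter ($\max(\emptyset)=0$). Let $\textsf{Shuffle}$ be the $\Bbbk$-vector space with basis all words, with the shuffle product $u\sqcup\!\sqcup v$ (sum over all interleavings of $u$ and $v$, with multiplicity) and deconcatenation coproduct. For a word $w=w_1\cdots w_m$ with $\max(w)\le n\in\mathbb{N}$, let $[w,n]$ be the linear endomorphism of $\textsf{Shuffle}$ sending a word $v$ of length $n$ to $v_{w_1}v_{w_2}\cdots v_{w_m}$ and all other words to $0$. Let $\textbf{W}$ be the span of all such $[w,n]$ (these form a basis), graded by declaring $[w,n]$ to have degree $\ell(w)$. For a word $w$ let $w\uparrow m$ be the word obtained by adding $m$ to each letter. Define $\nabla_{\sqcup\!\sqcup}([v,m]\otimes[w,n]) = [v\sqcup\!\sqcup (w\uparrow m), m+n]$ (extended linearly in the first slot), $\iota_{\sqcup\!\sqcup}(1)=[\emptyset,0]$, $\epsilon_\odot([w,n])=1$ if $w=\emptyset$ and $0$ otherwise, and $\Delta_\odot([w,n])=\sum_{i=0}^m [w_1\cdots w_i,n]\otimes[w_{i+1}\cdots w_m,n]$ for $w=w_1\cdots w_m$. *)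

(* Defs.v *)
From HB Require Import structures.
From mathcomp Require Import all_boot all_algebra.
From mathcomp Require Import finmap.
From mathcomp Require Import monalg.

Set Implicit Arguments.
Unset Strict Implicit.
Unset Printing Implicit Defensive.

Import GRing.Theory.
Local Open Scope ring_scope.

(* A word is a seq nat all of whose letters are positive.              *)

Fixpoint shuffle (u : seq nat) : seq nat -> seq (seq nat) :=
  match u with
  | [::] => fun v => [:: v]
  | a :: u' =>
      fix sh (v : seq nat) : seq (seq nat) :=
        match v with
        | [::] => [:: u]
        | b :: v' => map (cons a) (shuffle u' v) ++ map (cons b) (sh v')
        end
  end.

Definition shiftw (w : seq nat) (m : nat) : seq nat := map (addn m) w.

Definition maxw (w : seq nat) : nat := foldr maxn 0%N w.

(* The basis of W: pairs [w,n] with w a word and max(w) <= n.          *)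
Definition validWn (p : seq nat * nat) : bool :=
  all (fun a => 0 < a)%N p.1 && (maxw p.1 <= p.2)%N.

Definition Wbasis : choiceType := {p : seq nat * nat | validWn p}.

Definition bword (b : Wbasis) : seq nat := (val b).1.
Definition bnum (b : Wbasis) : nat := (val b).2.
Definition bdeg (b : Wbasis) : nat := size (bword b).

Section WDefs.
Variable k : fieldType.

(* W = free k-vector space on the basis elements [w,n];
   W (x) W and W (x) W (x) W are the free spaces on pairs / triples.   *)
Definition W := (@malg (Wbasis) k).
Definition W2 := (@malg (Wbasis * Wbasis)%type k).
Definition W3 := (@malg (Wbasis * Wbasis * Wbasis)%type k).

Definition linext (A : choiceType) (V : lmodType k) (h : A -> V)
    (g : (@malg (A) k)) : V :=
  \sum_(a <- msupp g) g@_a *: h a.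

Definition tens (A B : choiceType) (f : (@malg (A) k)) (g : (@malg (B) k))
    : (@malg (A * B)%type k) :=
  \sum_(a <- msupp f) \sum_(b <- msupp g) << f@_a * g@_b *g (a, b) >>.

Definition mapT (A B C D : choiceType)
    (f : (@malg (A) k) -> (@malg (C) k)) (g : (@malg (B) k) -> (@malg (D) k))
    : (@malg (A * B)%type k) -> (@malg (C * D)%type k) :=
  linext (fun ab : A * B => tens (f << ab.1 >>) (g << ab.2 >>)).

(* associativity isomorphism (A (x) B) (x) C -> A (x) (B (x) C) is implicit:
   we use the reassociation of basis triples. *)
Definition reassoc (A B C : choiceType)
    : (@malg (A * (B * C))%type k) -> (@malg (A * B * C)%type k) :=
  linext (fun t : A * (B * C) => << (t.1, t.2.1, t.2.2) >>).

(* The basis vector [w,n] (all pairs fed to it below are valid; an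
   invalid pair would give 0). *)
Definition mkB (p : seq nat * nat) : W :=
  if insub p is Some b then << b >> else 0.

Definition mulB (x y : Wbasis) : W :=
  \sum_(s <- shuffle (bword x) (shiftw (bword y) (bnum x)))
     mkB (s, (bnum x + bnum y)%N).

Definition nablaW : W2 -> W := linext (fun xy => mulB xy.1 xy.2).

Definition iotaW (c : k) : W := c *: mkB ([::], 0%N).

Definition epsW (g : W) : k :=
  \sum_(b <- msupp g) g@_b * (if bword b == [::] then 1 else 0).

Definition DeltaB (b : Wbasis) : W2 :=
  \sum_(i < (size (bword b)).+1)
     tens (mkB (take i (bword b), bnum b)) (mkB (drop i (bword b), bnum b)).

Definition DeltaW : W -> W2 := linext DeltaB.

Definition mul2 (X Y : W2) : W2 :=
  \sum_(p <- msupp X) \sum_(q <- msupp Y)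
     (X@_p * Y@_q) *: tens (mulB p.1 q.1) (mulB p.2 q.2).

(* identification  k (x) W = W = W (x) k  used for the counit axioms *)
Definition epsL : W2 -> W := linext (fun ab => epsW << ab.1 >> *: << ab.2 >>).
Definition epsR : W2 -> W := linext (fun ab => epsW << ab.2 >> *: << ab.1 >>).

Definition homog (d : nat) (x : W) : Prop :=
  forall b, b \in msupp x -> bdeg b = d.
Definition homog2 (d : nat) (X : W2) : Prop :=
  forall p, p \in msupp X -> (bdeg p.1 + bdeg p.2)%N = d.

Definition structure_maps_linear : Prop :=
  (forall (c : k) (X Y : W2), nablaW (c *: X + Y) = c *: nablaW X + nablaW Y) /\
  (forall (c : k) (x y : W), DeltaW (c *: x + y) = c *: DeltaW x + DeltaW y) /\
  (forall (c : k) (x y : W), epsW (c *: x + y) = c * epsW x + epsW y).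

Definition is_algebra : Prop :=
  (forall T : W3,
      nablaW (mapT nablaW id T)
      = nablaW (mapT id nablaW (linext (fun t : Wbasis * Wbasis * Wbasis =>
               << (t.1.1, (t.1.2, t.2)) >>) T))) /\
  (forall x : W, nablaW (tens (iotaW 1) x) = x /\ nablaW (tens x (iotaW 1)) = x).

Definition is_coalgebra : Prop :=
  (forall x : W,
      mapT DeltaW id (DeltaW x) = reassoc (mapT id DeltaW (DeltaW x))) /\
  (forall x : W, epsL (DeltaW x) = x /\ epsR (DeltaW x) = x).

Definition bialgebra_compat : Prop :=
  (forall x y : W, DeltaW (nablaW (tens x y)) = mul2 (DeltaW x) (DeltaW y)) /\
  DeltaW (iotaW 1) = tens (iotaW 1) (iotaW 1) /\
  (forall x y : W, epsW (nablaW (tens x y)) = epsW x * epsW y) /\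
  epsW (iotaW 1) = 1.

Definition graded_maps : Prop :=
  (forall i j (x y : W), homog i x -> homog j y ->
          homog (i + j) (nablaW (tens x y))) /\
  homog 0 (iotaW 1) /\
  (forall d (x : W), homog d x -> homog2 d (DeltaW x)) /\
  (forall d (x : W), (0 < d)%N -> homog d x -> epsW x = 0).

Definition is_graded_bialgebra : Prop :=
  structure_maps_linear /\ is_algebra /\ is_coalgebra /\
  bialgebra_compat /\ graded_maps.

Definition conv (f g : W -> W) (x : W) : W := nablaW (mapT f g (DeltaW x)).

Definition is_hopf : Prop :=
  exists S : {linear W -> W},
    forall x : W, conv S id x = iotaW (epsW x) /\ conv id S x = iotaW (epsW x).

End WDefs.

(* Main.v *)
From HB Require Import structures.
Require Import Defs.
From mathcomp Require Import all_boot all_algebra.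
From mathcomp Require Import finmap monalg.
From mathcomp Require Import zify.
Set Implicit Arguments.
Unset Strict Implicit.
Unset Printing Implicit Defensive.
Import GRing.Theory.
Local Open Scope ring_scope.
Section Comb.
Variable V : zmodType.

Lemma shE a u b v : shuffle (a :: u) (b :: v) =
  map (cons a) (shuffle u (b :: v)) ++ map (cons b) (shuffle (a :: u) v).
Proof. by []. Qed.

Lemma sh0s v : shuffle [::] v = [:: v]. Proof. by []. Qed.
Lemma shs0 u : shuffle u [::] = [:: u]. Proof. by case: u. Qed.

Lemma sumsh (F : seq nat -> V) a u b v :
  \sum_(t <- shuffle (a :: u) (b :: v)) F t =
  \sum_(t <- shuffle u (b :: v)) F (a :: t) + \sum_(t <- shuffle (a :: u) v) F (b :: t).
Proof. by rewrite shE big_cat !big_map. Qed.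

Lemma shuffle_map (f : nat -> nat) u v :
  shuffle (map f u) (map f v) = map (map f) (shuffle u v).
Proof.
elim: u v => [|a u IHu] v; first by [].
elim: v => [|b v IHv]; first by rewrite !shs0.
rewrite [map f (a :: u)]/= [map f (b :: v)]/=.
rewrite shE. 
rewrite -[f b :: map f v]/(map f (b :: v)) IHu -[f a :: map f u]/(map f (a :: u)) IHv [shuffle (a :: u) (b :: v)]shE map_cat -!map_comp.
by [].
Qed.

Lemma shuffle_perm u v s : s \in shuffle u v -> perm_eq s (u ++ v).
Proof.
elim: u v s => [|a u IHu] v s; first by rewrite sh0s inE => /eqP ->.
elim: v s => [|b v IHv] s; first by rewrite shs0 inE cats0 => /eqP ->.
rewrite shE mem_cat => /orP [] /mapP [s' Hs' ->].
  by rewrite /= perm_cons; apply: IHu.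
rewrite (_ : (a :: u) ++ b :: v = (a :: u) ++ [:: b] ++ v) //.
by rewrite perm_sym perm_catCA /= perm_cons perm_sym; apply: IHv.
Qed.

Lemma shuffle_assoc (F : seq nat -> V) u v w :
  \sum_(s <- shuffle u v) \sum_(t <- shuffle s w) F t =
  \sum_(s <- shuffle v w) \sum_(t <- shuffle u s) F t.
Proof.
move: {2}(size u + size v + size w)%N (leqnn (size u + size v + size w)) => n.
elim: n u v w F => [|n IH] u v w F Hn.
  case: u Hn => [|? ?] //; case: v => [|? ?] //; case: w => [|? ?] //= _.
  by rewrite !big_seq1.
case: u Hn => [|a u] Hn.
  by rewrite sh0s big_seq1; apply: eq_bigr => s _; rewrite sh0s big_seq1.
case: v Hn => [|b v] Hn; first by rewrite sh0s shs0 big_seq1 big_seq1.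
case: w Hn => [|c w] Hn.
  by rewrite shs0 big_seq1; apply: eq_bigr => s _; rewrite shs0 big_seq1.
have Hs1 : (size u + size (b :: v) + size (c :: w) <= n)%N.
  by move: Hn; rewrite /= !addSn.
have Hs2 : (size (a :: u) + size v + size (c :: w) <= n)%N.
  by move: Hn; rewrite /= !addSn !addnS.
have Hs3 : (size (a :: u) + size (b :: v) + size w <= n)%N.
  by move: Hn; rewrite /= !addSn !addnS.
transitivity (\sum_(s <- shuffle u (b :: v)) \sum_(t <- shuffle s (c :: w)) F (a :: t) +
  \sum_(s <- shuffle (a :: u) v) \sum_(t <- shuffle s (c :: w)) F (b :: t) +
  \sum_(s <- shuffle (a :: u) (b :: v)) \sum_(t <- shuffle s w) F (c :: t)).
  rewrite (sumsh (fun s => \sum_(t <- shuffle s w) F (c :: t))).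
  rewrite [LHS]sumsh.
  under eq_bigr do rewrite sumsh.
  under [X in _ + X = _]eq_bigr do rewrite sumsh.
  rewrite !big_split /=.
  by rewrite addrACA addrA.
rewrite (IH _ _ _ _ Hs1) (IH _ _ _ _ Hs2) (IH _ _ _ _ Hs3).
rewrite (sumsh (fun s => \sum_(t <- shuffle u s) F (a :: t))).
rewrite [RHS]sumsh.
under [in RHS]eq_bigr do rewrite sumsh.
under [X in _ = _ + X]eq_bigr do rewrite sumsh.
rewrite !big_split /=.
by rewrite -!addrA; congr (_ + _); rewrite addrCA.
Qed.

End Comb.
Section Dsum.
Variable V : zmodType.
Definition Dsum (s : seq nat) (G : seq nat -> seq nat -> V) :=
  \sum_(i < (size s).+1) G (take i s) (drop i s).

Lemma Dsum_nil G : Dsum [::] G = G [::] [::].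
Proof. by rewrite /Dsum big_ord_recl big_ord0 addr0. Qed.

Lemma Dsum_cons x s G :
  Dsum (x :: s) G = G [::] (x :: s) + Dsum s (fun p q => G (x :: p) q).
Proof. by rewrite /Dsum big_ord_recl. Qed.

Lemma eq_Dsum s G1 G2 : (forall p q, G1 p q = G2 p q) -> Dsum s G1 = Dsum s G2.
Proof. by move=> E; apply: eq_bigr => i _; rewrite E. Qed.

Lemma eq_Dsum_in s G1 G2 :
  (forall i, (i <= size s)%N -> G1 (take i s) (drop i s) = G2 (take i s) (drop i s)) ->
  Dsum s G1 = Dsum s G2.
Proof. by move=> E; apply: eq_bigr => i _; apply: E; rewrite -ltnS. Qed.

Lemma Dsum_add s G1 G2 :
  Dsum s (fun p q => G1 p q + G2 p q) = Dsum s G1 + Dsum s G2.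
Proof. by rewrite /Dsum big_split. Qed.

Lemma Dsum0 s : Dsum s (fun _ _ => 0) = 0.
Proof. by rewrite /Dsum big1. Qed.

Lemma Dsum_map f s H :
  Dsum (map f s) H = Dsum s (fun p q => H (map f p) (map f q)).
Proof.
rewrite /Dsum size_map; apply: eq_bigr => i _; by rewrite map_take map_drop.
Qed.

Lemma Dsum_coassoc (H : seq nat -> seq nat -> seq nat -> V) w :
  Dsum w (fun p r => Dsum p (fun a b => H a b r)) =
  Dsum w (fun a p => Dsum p (fun b c => H a b c)).
Proof.
elim: w H => [|x w IH] H; first by rewrite !Dsum_nil.
rewrite !Dsum_cons !Dsum_nil.
under eq_Dsum do rewrite Dsum_cons.
by rewrite Dsum_add (IH (fun a => H (x :: a))) addrA.
Qed.

Lemma Dsum_counitL (F : seq nat -> V) w :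
  Dsum w (fun p q => if p is [::] then F q else 0) = F w.
Proof.
case: w => [|x w]; first by rewrite Dsum_nil.
by rewrite Dsum_cons Dsum0 addr0.
Qed.

Lemma Dsum_counitR (F : seq nat -> V) w :
  Dsum w (fun p q => if q is [::] then F p else 0) = F w.
Proof.
elim: w F => [|x w IH] F; first by rewrite Dsum_nil.
by rewrite Dsum_cons add0r (IH (fun p => F (x :: p))).
Qed.

Lemma shuffle_Dsum (G : seq nat -> seq nat -> V) u v :
  \sum_(s <- shuffle u v) Dsum s G =
  Dsum u (fun u1 u2 => Dsum v (fun v1 v2 =>
     \sum_(s1 <- shuffle u1 v1) \sum_(s2 <- shuffle u2 v2) G s1 s2)).
Proof.
move: {2}(size u + size v)%N (leqnn (size u + size v)) => n.
elim: n u v G => [|n IH] u v G Hn.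
  case: u Hn => [|? ?] //; case: v => [|? ?] // _.
  by rewrite !big_seq1 !Dsum_nil !big_seq1.
case: u Hn => [|a u] Hn.
  rewrite sh0s big_seq1 Dsum_nil; apply: eq_Dsum => p q.
  by rewrite !sh0s !big_seq1.
case: v Hn => [|b v] Hn.
  rewrite shs0 big_seq1; apply: eq_Dsum => p q.
  by rewrite Dsum_nil !shs0 !big_seq1.
have Hs1 : (size u + size (b :: v) <= n)%N by move: Hn; rewrite /= addSn.
have Hs2 : (size (a :: u) + size v <= n)%N by move: Hn; rewrite /= addnS.
pose S (G' : seq nat -> seq nat -> V) u1 v1 u2 v2 :=
  \sum_(s1 <- shuffle u1 v1) \sum_(s2 <- shuffle u2 v2) G' s1 s2.
have R1 : Dsum (a :: u) (fun u1 u2 => Dsum (b :: v) (fun v1 v2 => S G u1 v1 u2 v2)) =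
  \sum_(s <- shuffle (a :: u) (b :: v)) G [::] s
  + Dsum v (fun v1 v2 => \sum_(s2 <- shuffle (a :: u) v2) G (b :: v1) s2)
  + Dsum u (fun u1 u2 => \sum_(s2 <- shuffle u2 (b :: v)) G (a :: u1) s2 +
       Dsum v (fun v1 v2 => S (fun s1 => G (a :: s1)) u1 (b :: v1) u2 v2
                          + S (fun s1 => G (b :: s1)) (a :: u1) v1 u2 v2)).
  rewrite Dsum_cons Dsum_cons /S sh0s big_seq1; congr (_ + _ + _).
    by apply: eq_Dsum => p q; rewrite sh0s big_seq1.
  apply: eq_Dsum => p q; rewrite Dsum_cons shs0 big_seq1; congr (_ + _).
  by apply: eq_Dsum => p' q'; rewrite sumsh.
have L1 : Dsum u (fun u1 u2 => Dsum (b :: v) (fun v1 v2 => S (fun s1 => G (a :: s1)) u1 v1 u2 v2)) =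
  Dsum u (fun u1 u2 => \sum_(s2 <- shuffle u2 (b :: v)) G (a :: u1) s2 +
       Dsum v (fun v1 v2 => S (fun s1 => G (a :: s1)) u1 (b :: v1) u2 v2)).
  apply: eq_Dsum => p q; rewrite Dsum_cons /S shs0 big_seq1 //.
have L2 : Dsum (a :: u) (fun u1 u2 => Dsum v (fun v1 v2 => S (fun s1 => G (b :: s1)) u1 v1 u2 v2)) =
  Dsum v (fun v1 v2 => \sum_(s2 <- shuffle (a :: u) v2) G (b :: v1) s2)
  + Dsum u (fun u1 u2 => Dsum v (fun v1 v2 => S (fun s1 => G (b :: s1)) (a :: u1) v1 u2 v2)).
  rewrite Dsum_cons /S; congr (_ + _).
  by apply: eq_Dsum => p q; rewrite sh0s big_seq1.
rewrite sumsh.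
under eq_bigr do rewrite Dsum_cons.
under [X in _ + X]eq_bigr do rewrite Dsum_cons.
rewrite big_split [X in _ + X]big_split /=.
rewrite -/(shuffle (a :: u) v).
rewrite (IH _ _ _ Hs1) (IH _ _ _ Hs2).
rewrite R1 L1 L2 sumsh.
rewrite !Dsum_add.
under [X in _ = _ + (_ + X)]eq_Dsum do rewrite Dsum_add.
rewrite Dsum_add.
set A1 := \sum_(i <- shuffle u (b :: v)) _.
set A2 := \sum_(i <- shuffle (a :: u) v) _.
set A3 := Dsum v _.
set A4 := Dsum u (fun p q => \sum_(s2 <- shuffle q (b :: v)) _).
set A5 := Dsum u (fun p q => Dsum v (fun p0 => _ (b :: p0) q)).
set A6 := Dsum u (fun p q => Dsum v (fun p0 => _ (a :: p) p0 q)).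
by rewrite -!addrA; congr (_ + _); rewrite (addrCA A5 A2) (addrCA A5 A3) (addrCA A4 A2) (addrCA A4 A3).
Qed.
End Dsum.
Section Lin.
Variable k : fieldType.

Definition lin (A : choiceType) (V : lmodType k) (f : {malg k[A]} -> V) :=
  forall c x y, f (c *: x + y) = c *: f x + f y.

Section LinA.
Variables (A : choiceType) (V : lmodType k).
Implicit Types (f g : {malg k[A]} -> V) (h : A -> V).

Lemma linextEw h x (D : {fset A}) : (msupp x `<=` D)%fset ->
  linext h x = \sum_(a <- D) x@_a *: h a.
Proof.
move=> le; rewrite /linext [LHS](big_fset_incl _ le) => //= a aD /mcoeff_outdom ->.
by rewrite scale0r.
Qed.

Lemma lin_linext h : lin (linext h).
Proof.
move=> c x y.
have Hx : (msupp x `<=` msupp x `|` msupp y)%fset by apply: fsubsetUl.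
have Hy : (msupp y `<=` msupp x `|` msupp y)%fset by apply: fsubsetUr.
have Hxy : (msupp (c *: x + y) `<=` msupp x `|` msupp y)%fset.
  apply: fsubset_trans (msuppD_le _ _) _; apply: fsetSU; exact: msuppZ_le.
rewrite (linextEw _ Hx) (linextEw _ Hy) (linextEw _ Hxy) scaler_sumr -big_split.
by apply: eq_bigr => a _; rewrite mcoeffD mcoeffZ scalerDl scalerA.
Qed.

Lemma lin0 f : lin f -> f 0 = 0.
Proof.
move=> lf; have := lf 1 0 0; rewrite !scale1r addr0 => H.
by apply: (addrI (f 0)); rewrite addr0 -H.
Qed.

Lemma linD f : lin f -> forall x y, f (x + y) = f x + f y.
Proof. by move=> lf x y; have := lf 1 x y; rewrite !scale1r. Qed.

Lemma linZ f : lin f -> forall c x, f (c *: x) = c *: f x.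
Proof. by move=> lf c x; have := lf c x 0; rewrite !addr0 (lin0 lf) addr0. Qed.

Lemma lin_sum f (I : Type) (r : seq I) (P : pred I) (F : I -> {malg k[A]}) :
  lin f -> f (\sum_(i <- r | P i) F i) = \sum_(i <- r | P i) f (F i).
Proof. move=> lf; apply: (big_morph f (linD lf) (lin0 lf)). Qed.

Lemma malgUZ (c : k) (a : A) : << c *g a >> = c *: << a >>.
Proof. by apply/malgP => b; rewrite mcoeffZ !mcoeffU mulr_natr. Qed.

Lemma linextU h c a : linext h << c *g a >> = c *: h a.
Proof. by rewrite (linextEw _ msuppU_le) big_seq_fset1 mcoeffUU. Qed.

Lemma linextU1 h a : linext h << a >> = h a.
Proof. by rewrite linextU scale1r. Qed.

Lemma lin_expand f : lin f -> forall x, f x = linext (fun a => f << a >>) x.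
Proof.
move=> lf x; rewrite {1}(monalgE x) lin_sum //.
by apply: eq_bigr => a _; rewrite malgUZ linZ.
Qed.

Lemma lin_eq f g : lin f -> lin g -> (forall a, f << a >> = g << a >>) ->
  forall x, f x = g x.
Proof.
move=> lf lg E x; rewrite (lin_expand lf) (lin_expand lg).
by apply: eq_bigr => a _; rewrite E.
Qed.

Lemma linext_addf h1 h2 x :
  linext (fun a => h1 a + h2 a) x = linext h1 x + linext h2 x.
Proof. by rewrite /linext -big_split; apply: eq_bigr => a _; rewrite scalerDr. Qed.

Lemma linext_scalef (c : k) h x :
  linext (fun a => c *: h a) x = c *: linext h x.
Proof. by rewrite /linext scaler_sumr; apply: eq_bigr => a _; rewrite !scalerA mulrC. Qed.

Lemma linext_eqf h1 h2 x : (forall a, h1 a = h2 a) -> linext h1 x = linext h2 x.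
Proof. by move=> E; apply: eq_bigr => a _; rewrite E. Qed.

Lemma lin_linextf (x : {malg k[A]}) (B : choiceType) (F : A -> {malg k[B]} -> V) :
  (forall a, lin (F a)) -> lin (fun y => linext (fun a => F a y) x).
Proof.
move=> lF c y z; rewrite -linext_scalef -linext_addf; apply: linext_eqf => a.
exact: lF.
Qed.
End LinA.

Lemma lin_comp (A B : choiceType) (V : lmodType k) (f : {malg k[B]} -> V)
   (g : {malg k[A]} -> {malg k[B]}) : lin f -> lin g -> lin (fun x => f (g x)).
Proof. by move=> lf lg c x y; rewrite lg lf. Qed.

Lemma lin_linext_comp (A : choiceType) (U V : lmodType k) (f : U -> V)
   (h : A -> U) x :
  (forall c u v, f (c *: u + v) = c *: f u + f v) ->
  f (linext h x) = linext (fun a => f (h a)) x.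
Proof.
move=> lf.
have f0 : f 0 = 0.
  have := lf 1 0 0; rewrite !scale1r addr0 => H.
  by apply: (addrI (f 0)); rewrite addr0 -H.
have fD : forall u v, f (u + v) = f u + f v by move=> u v; have := lf 1 u v; rewrite !scale1r.
have fZ : forall c u, f (c *: u) = c *: f u by move=> c u; have := lf c u 0; rewrite !addr0 f0 addr0.
rewrite /linext (big_morph f fD f0); apply: eq_bigr => a _; by rewrite fZ.
Qed.

Lemma bilin_eq (A B : choiceType) (V : lmodType k)
  (F G : {malg k[A]} -> {malg k[B]} -> V) :
  (forall y, lin (F^~ y)) -> (forall x, lin (F x)) ->
  (forall y, lin (G^~ y)) -> (forall x, lin (G x)) ->
  (forall a b, F << a >> << b >> = G << a >> << b >>) ->
  forall x y, F x y = G x y.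
Proof.
move=> F1 F2 G1 G2 E x y.
apply: (lin_eq (F1 y) (G1 y)) => a.
by apply: (lin_eq (F2 _) (G2 _)) => b.
Qed.

Section Tens.
Variables (A B : choiceType).

Lemma tensE (x : {malg k[A]}) (y : {malg k[B]}) :
  tens x y = linext (fun a => linext (fun b => << (a, b) >>) y) x.
Proof.
apply: eq_bigr => a _; rewrite /linext scaler_sumr; apply: eq_bigr => b _.
by rewrite malgUZ scalerA.
Qed.

Lemma lin_tensl (y : {malg k[B]}) : lin (fun x : {malg k[A]} => tens x y).
Proof. by move=> c x z; rewrite !tensE lin_linext. Qed.

Lemma lin_tensr (x : {malg k[A]}) : lin (fun y : {malg k[B]} => tens x y).
Proof.
move=> c y z; rewrite !tensE.
apply: (@lin_linextf _ _ x B (fun a y => linext (fun b => << (a, b) >>) y)).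
move=> a; exact: lin_linext.
Qed.

Lemma tensUU (a : A) (b : B) : tens (<< a >> : {malg k[A]}) (<< b >> : {malg k[B]}) = << (a, b) >>.
Proof. by rewrite tensE !linextU1. Qed.
End Tens.

End Lin.
Section WW.
Variable k : fieldType.
Local Notation W := (W k).
Local Notation W2 := (W2 k).
Local Notation mkB := (mkB k).

Lemma maxw_leq w n : (maxw w <= n)%N = all (fun a => a <= n)%N w.
Proof. by elim: w => //= a w IH; rewrite geq_max IH. Qed.

Lemma validE p : validWn p = all (fun a => (0 < a) && (a <= p.2))%N p.1.
Proof. by rewrite /validWn maxw_leq -all_predI. Qed.

Lemma mkB_valid p (Hp : validWn p) : mkB p = << (exist _ p Hp : Wbasis) >>.
Proof. by rewrite /mkB insubT. Qed.

Lemma mkB_invalid p : ~~ validWn p -> mkB p = 0.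
Proof. by move=> H; rewrite /mkB insubF //; apply/negbTE. Qed.

Lemma mkB_val (b : Wbasis) : mkB (val b) = << b >>.
Proof. by rewrite /mkB valK. Qed.

Lemma valid_take w n i : validWn (w, n) -> validWn (take i w, n).
Proof. by rewrite !validE /= -{1}(cat_take_drop i w) all_cat => /andP[]. Qed.

Lemma valid_drop w n i : validWn (w, n) -> validWn (drop i w, n).
Proof. by rewrite !validE /= -{1}(cat_take_drop i w) all_cat => /andP[]. Qed.

Lemma valid_shuffle p q s : validWn p -> validWn q ->
  s \in shuffle p.1 (shiftw q.1 p.2) -> validWn (s, (p.2 + q.2)%N).
Proof.
rewrite !validE => Hp Hq /shuffle_perm Hs; rewrite /= (perm_all _ Hs) all_cat.
apply/andP; split.
  by apply: sub_all Hp => a /andP[H1 H2]; apply/andP; split => //; lia.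
rewrite /shiftw all_map; apply: sub_all Hq => a /andP[H1 H2] /=.
by apply/andP; split; lia.
Qed.

Definition mulP (p q : seq nat * nat) : W :=
  \sum_(s <- shuffle p.1 (shiftw q.1 p.2)) mkB (s, (p.2 + q.2)%N).
Definition DeltaP (p : seq nat * nat) : W2 :=
  Dsum p.1 (fun a b => tens (mkB (a, p.2)) (mkB (b, p.2))).

Lemma mulBE a b : mulB k a b = mulP (val a) (val b). Proof. by []. Qed.
Lemma DeltaBE b : DeltaB k b = DeltaP (val b). Proof. by []. Qed.

Lemma lin_nabla : lin (@nablaW k). Proof. exact: lin_linext. Qed.
Lemma lin_Delta : lin (@DeltaW k). Proof. exact: lin_linext. Qed.

Lemma epsWE (x : W) :
  epsW x = linext (V := k^o) (fun b => if bword b == [::] then 1 else 0) x.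
Proof. by apply: eq_bigr => b _. Qed.

Lemma lin_eps : lin (V := k^o) (@epsW k).
Proof. by move=> c x y; rewrite !epsWE lin_linext. Qed.

Lemma epsD (x y : W) : epsW (x + y) = epsW x + epsW y.
Proof. exact: (linD lin_eps). Qed.
Lemma epsZ c (x : W) : epsW (c *: x) = c * epsW x.
Proof. exact: (linZ lin_eps). Qed.
Lemma eps0 : epsW (0 : W) = 0.
Proof. exact: (lin0 lin_eps). Qed.

Lemma epsU (b : Wbasis) : epsW (<< b >> : W) = (bword b == [::])%:R.
Proof. by rewrite epsWE linextU1; case: eqP. Qed.

Lemma nabla_mkB p q : validWn p -> validWn q ->
  nablaW (tens (mkB p) (mkB q)) = mulP p q.
Proof. by move=> Hp Hq; rewrite (mkB_valid Hp) (mkB_valid Hq) tensUU /nablaW linextU1. Qed.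

Lemma Delta_mkB p : validWn p -> DeltaW (mkB p) = DeltaP p.
Proof. by move=> Hp; rewrite (mkB_valid Hp) /DeltaW linextU1. Qed.

Lemma eps_mkB p : validWn p -> epsW (mkB p) = (p.1 == [::])%:R.
Proof. by move=> Hp; rewrite (mkB_valid Hp) epsU. Qed.

Lemma lin_Dsum (A B : choiceType) (f : {malg k[A]} -> {malg k[B]}) s G :
  lin f -> f (Dsum s G) = Dsum s (fun p q => f (G p q)).
Proof. by move=> lf; rewrite /Dsum lin_sum. Qed.

Lemma mapT_tens (A B C D : choiceType) (f : {malg k[A]} -> {malg k[C]})
  (g : {malg k[B]} -> {malg k[D]}) x y :
  lin f -> lin g -> mapT f g (tens x y) = tens (f x) (g y).
Proof.
move=> lf lg; move: x y.
apply: (@bilin_eq k A B _ (fun x y => mapT f g (tens x y)) (fun x y => tens (f x) (g y))).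
- by move=> y'; apply: lin_comp; [exact: lin_linext | exact: lin_tensl].
- by move=> x'; apply: lin_comp; [exact: lin_linext | exact: lin_tensr].
- by move=> y'; exact: (lin_comp (lin_tensl _) lf).
- by move=> x'; exact: (lin_comp (lin_tensr _) lg).
- by move=> a b; rewrite tensUU /mapT linextU1.
Qed.

Lemma reassoc_tens (A B C : choiceType) (x : {malg k[A]}) (y : {malg k[B]})
  (z : {malg k[C]}) : reassoc (tens x (tens y z)) = tens (tens x y) z.
Proof.
move: x y.
apply: (@bilin_eq k A B _ (fun x y => reassoc (tens x (tens y z))) (fun x y => tens (tens x y) z)).
- by move=> y'; apply: lin_comp; [exact: lin_linext | exact: lin_tensl].
- move=> x'; apply: lin_comp; first exact: lin_linext.
  by apply: lin_comp; [exact: lin_tensr | exact: lin_tensl].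
- by move=> y'; exact: (lin_comp (lin_tensl z) (lin_tensl y')).
- by move=> x'; exact: (lin_comp (lin_tensl z) (lin_tensr x')).
move=> a b; rewrite tensUU; move: z.
apply: lin_eq.
- exact: (lin_comp (lin_linext _) (lin_comp (lin_tensr _) (lin_tensr _))).
- exact: lin_tensr.
by move=> c; rewrite !tensUU /reassoc linextU1.
Qed.

Lemma epsL_tens (x y : W) : epsL (tens x y) = epsW x *: y.
Proof.
move: x y.
apply: (@bilin_eq k _ _ _ (fun x y => epsL (tens x y)) (fun x y => epsW x *: y)).
- by move=> y'; apply: lin_comp; [exact: lin_linext | exact: lin_tensl].
- by move=> x'; apply: lin_comp; [exact: lin_linext | exact: lin_tensr].
- by move=> y' c x z /=; rewrite epsD epsZ scalerDl scalerA.
- by move=> x' c y z /=; rewrite scalerDr !scalerA mulrC.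
by move=> a b; rewrite tensUU /epsL linextU1.
Qed.

Lemma epsR_tens (x y : W) : epsR (tens x y) = epsW y *: x.
Proof.
move: x y.
apply: (@bilin_eq k _ _ _ (fun x y => epsR (tens x y)) (fun x y => epsW y *: x)).
- by move=> y'; apply: lin_comp; [exact: lin_linext | exact: lin_tensl].
- by move=> x'; apply: lin_comp; [exact: lin_linext | exact: lin_tensr].
- by move=> y' c x z /=; rewrite scalerDr !scalerA mulrC.
- by move=> x' c y z /=; rewrite epsD epsZ scalerDl scalerA.
by move=> a b; rewrite tensUU /epsR linextU1.
Qed.

Lemma mul2E (X Y : W2) : mul2 X Y =
  linext (fun p => linext (fun q => tens (mulB k p.1 q.1) (mulB k p.2 q.2)) Y) X.
Proof.
apply: eq_bigr => p _; rewrite /linext scaler_sumr; apply: eq_bigr => q _.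
by rewrite scalerA.
Qed.

Lemma lin_mul2l (Y : W2) : lin (fun X => mul2 X Y).
Proof. by move=> c x y; rewrite !mul2E lin_linext. Qed.

Lemma lin_mul2r (X : W2) : lin (mul2 X).
Proof.
move=> c x y; rewrite !mul2E.
apply: (@lin_linextf _ _ _ X _ (fun p Y => linext (fun q => tens (mulB k p.1 q.1) (mulB k p.2 q.2)) Y)).
by move=> p; exact: lin_linext.
Qed.

Lemma mul2_tens (x1 x2 y1 y2 : W) :
  mul2 (tens x1 x2) (tens y1 y2) = tens (nablaW (tens x1 y1)) (nablaW (tens x2 y2)).
Proof.
move: x1 y1.
apply: (@bilin_eq k _ _ _ (fun x1 y1 => mul2 (tens x1 x2) (tens y1 y2))
   (fun x1 y1 => tens (nablaW (tens x1 y1)) (nablaW (tens x2 y2)))).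
- by move=> y'; exact: (lin_comp (lin_mul2l _) (lin_tensl _)).
- by move=> x'; exact: (lin_comp (lin_mul2r _) (lin_tensl _)).
- by move=> y'; exact: (lin_comp (lin_tensl _) (lin_comp lin_nabla (lin_tensl _))).
- by move=> x'; exact: (lin_comp (lin_tensl _) (lin_comp lin_nabla (lin_tensr _))).
move=> a c; rewrite tensUU /nablaW linextU1 /=; move: x2 y2.
apply: (@bilin_eq k _ _ _ (fun x2 y2 => mul2 (tens << a >> x2) (tens << c >> y2))
   (fun x2 y2 => tens (mulB k a c) (nablaW (tens x2 y2)))).
- by move=> y'; exact: (lin_comp (lin_mul2l _) (lin_tensr _)).
- by move=> x'; exact: (lin_comp (lin_mul2r _) (lin_tensr _)).
- by move=> y'; exact: (lin_comp (lin_tensr _) (lin_comp lin_nabla (lin_tensl _))).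
- by move=> x'; exact: (lin_comp (lin_tensr _) (lin_comp lin_nabla (lin_tensr _))).
move=> b d; rewrite !tensUU mul2E !linextU1 /= /nablaW linextU1 //.
Qed.
End WW.
Section Main.
Variable k : fieldType.
Local Notation W := (W k).
Local Notation W2 := (W2 k).
Local Notation mkB := (mkB k).

Lemma shiftw_shiftw w m n : shiftw (shiftw w n) m = shiftw w (m + n).
Proof. by rewrite /shiftw -map_comp; apply: eq_map => x /=; rewrite addnA. Qed.

Lemma shiftw0 w : shiftw w 0 = w.
Proof. by rewrite /shiftw (@eq_map _ _ (addn 0) id) ?map_id. Qed.

Lemma nabla_suml (I : Type) (r : seq I) (P : pred I) (F : I -> W) (y : W) :
  nablaW (tens (\sum_(i <- r | P i) F i) y) = \sum_(i <- r | P i) nablaW (tens (F i) y).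
Proof. exact: (lin_sum _ _ _ (lin_comp (@lin_nabla k) (lin_tensl y))). Qed.

Lemma nabla_sumr (I : Type) (r : seq I) (P : pred I) (F : I -> W) (x : W) :
  nablaW (tens x (\sum_(i <- r | P i) F i)) = \sum_(i <- r | P i) nablaW (tens x (F i)).
Proof. exact: (lin_sum _ _ _ (lin_comp (@lin_nabla k) (lin_tensr x))). Qed.

Lemma Delta_sum (I : Type) (r : seq I) (P : pred I) (F : I -> W) :
  DeltaW (\sum_(i <- r | P i) F i) = \sum_(i <- r | P i) DeltaW (F i).
Proof. exact: (lin_sum _ _ _ (@lin_Delta k)). Qed.

Lemma eps_sum (I : Type) (r : seq I) (P : pred I) (F : I -> W) :
  epsW (\sum_(i <- r | P i) F i) = \sum_(i <- r | P i) epsW (F i).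
Proof. exact: (big_morph _ (@epsD k) (@eps0 k)). Qed.

Lemma tens_suml (A B : choiceType) (I : Type) (r : seq I) (P : pred I)
  (F : I -> {malg k[A]}) (y : {malg k[B]}) :
  tens (\sum_(i <- r | P i) F i) y = \sum_(i <- r | P i) tens (F i) y.
Proof. exact: (lin_sum _ _ _ (lin_tensl y)). Qed.

Lemma tens_sumr (A B : choiceType) (I : Type) (r : seq I) (P : pred I)
  (F : I -> {malg k[B]}) (x : {malg k[A]}) :
  tens x (\sum_(i <- r | P i) F i) = \sum_(i <- r | P i) tens x (F i).
Proof. exact: (lin_sum _ _ _ (lin_tensr x)). Qed.

Lemma mulPE u m v n : mulP k (u, m) (v, n) =
  \sum_(s <- shuffle u (shiftw v m)) mkB (s, (m + n)%N).
Proof. by []. Qed.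

Lemma assocP p q r : validWn p -> validWn q -> validWn r ->
  nablaW (tens (mulP k p q) (mkB r)) = nablaW (tens (mkB p) (mulP k q r)).
Proof.
case: p => u m; case: q => v n; case: r => w p Ha Hb Hc.
rewrite [in X in X = _]mulPE [in X in _ = X]mulPE [in X in X = _]nabla_suml [in X in _ = X]nabla_sumr.
rewrite [X in X = _](eq_big_seq (fun s => mulP k (s, (m + n)%N) (w, p))); last first.
  move=> s Hs; apply: nabla_mkB => //.
  exact: (valid_shuffle (p := (u, m)) (q := (v, n))).
rewrite [X in _ = X](eq_big_seq (fun s => mulP k (u, m) (s, (n + p)%N))); last first.
  move=> s Hs; apply: nabla_mkB => //.
  exact: (valid_shuffle (p := (v, n)) (q := (w, p))).
under [X in X = _]eq_bigr do rewrite mulPE.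
under [X in _ = X]eq_bigr do rewrite mulPE.
have E : shuffle (shiftw v m) (shiftw w (m + n)) =
    map (shiftw^~ m) (shuffle v (shiftw w n)).
  by rewrite -shiftw_shiftw /shiftw shuffle_map.
rewrite shuffle_assoc E big_map.
by apply: eq_bigr => s _; apply: eq_bigr => t _; rewrite addnA.
Qed.

Lemma assocB (a b c : Wbasis) :
  nablaW (tens (mulB k a b) << c >>) = nablaW (tens << a >> (mulB k b c)).
Proof.
rewrite !mulBE -(mkB_val k c) -(mkB_val k a); apply: assocP; exact: valP.
Qed.

End Main.
Section Main2.
Variable k : fieldType.
Local Notation W := (W k).
Local Notation W2 := (W2 k).
Local Notation mkB := (mkB k).

Lemma DeltaPE s N : DeltaP k (s, N) = Dsum s (fun a b => tens (mkB (a, N)) (mkB (b, N))).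
Proof. by []. Qed.

Lemma mul2_Dsuml s G (Y : W2) : mul2 (Dsum s G) Y = Dsum s (fun p q => mul2 (G p q) Y).
Proof. exact: (@lin_Dsum k _ _ (fun X => mul2 X Y) s G (lin_mul2l Y)). Qed.
Lemma mul2_Dsumr s G (X : W2) : mul2 X (Dsum s G) = Dsum s (fun p q => mul2 X (G p q)).
Proof. exact: (@lin_Dsum k _ _ (fun Y => mul2 X Y) s G (lin_mul2r X)). Qed.

Lemma Delta_mulP p q : validWn p -> validWn q ->
  DeltaW (mulP k p q) = mul2 (DeltaP k p) (DeltaP k q).
Proof.
case: p => u m; case: q => v n Ha Hb.
rewrite [in X in X = _]mulPE [in X in X = _]Delta_sum.
rewrite [X in X = _](eq_big_seq (fun s => DeltaP k (s, (m + n)%N))); last first.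
  move=> s Hs; apply: Delta_mkB.
  exact: (valid_shuffle (p := (u, m)) (q := (v, n))).
under [X in X = _]eq_bigr do rewrite DeltaPE.
rewrite shuffle_Dsum [in X in _ = X]DeltaPE [in X in _ = X]DeltaPE mul2_Dsuml.
apply: eq_Dsum_in => i Hi.
rewrite mul2_Dsumr /shiftw Dsum_map.
apply: eq_Dsum_in => j Hj.
rewrite [in X in _ = X]mul2_tens.
transitivity (tens (mulP k (take i u, m) (take j v, n)) (mulP k (drop i u, m) (drop j v, n))); last first.
  by congr tens; symmetry; apply: nabla_mkB; [apply: valid_take|apply: valid_take|apply: valid_drop|apply: valid_drop].
rewrite (mulPE k (take i u)) (mulPE k (drop i u)) [X in _ = X]tens_suml.
by apply: eq_bigr => s1 _; rewrite tens_sumr.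
Qed.

Lemma eps_mulP p q : validWn p -> validWn q ->
  epsW (mulP k p q) = (p.1 == [::])%:R * (q.1 == [::])%:R.
Proof.
case: p => u m; case: q => v n Ha Hb.
rewrite mulPE eps_sum.
rewrite (eq_big_seq (fun s => ((s == [::])%:R : k))); last first.
  move=> s Hs; rewrite eps_mkB //.
  exact: (valid_shuffle (p := (u, m)) (q := (v, n))).
case: u Ha => [|x u] Ha.
  by rewrite sh0s big_seq1 mul1r /=; case: v Hb.
rewrite mul0r big1_seq // => s /andP[_ /shuffle_perm /perm_size].
by case: s.
Qed.

End Main2.
Section Main3.
Variable k : fieldType.
Local Notation W := (W k).
Local Notation W2 := (W2 k).
Local Notation mkB := (mkB k).

Lemma lin_id (A : choiceType) : lin (fun x : {malg k[A]} => x).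
Proof. by []. Qed.

Lemma epsL_Dsum s (G : seq nat -> seq nat -> W2) : epsL (Dsum s G) = Dsum s (fun a b => epsL (G a b)).
Proof. exact: (@lin_Dsum k _ _ (@epsL k) s G (lin_linext _)). Qed.
Lemma epsR_Dsum s (G : seq nat -> seq nat -> W2) : epsR (Dsum s G) = Dsum s (fun a b => epsR (G a b)).
Proof. exact: (@lin_Dsum k _ _ (@epsR k) s G (lin_linext _)). Qed.

Lemma epsL_DeltaP p : validWn p -> epsL (DeltaP k p) = mkB p.
Proof.
case: p => w n Hp; rewrite DeltaPE epsL_Dsum.
transitivity (Dsum w (fun p q => if p is [::] then mkB (q, n) else 0)); last first.
  exact: (Dsum_counitL (fun q => mkB (q, n))).
apply: eq_Dsum_in => i Hi; rewrite epsL_tens eps_mkB; last exact: valid_take.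
by case: (take i w) => [|? ?] /=; rewrite ?scale1r ?scale0r.
Qed.

Lemma epsR_DeltaP p : validWn p -> epsR (DeltaP k p) = mkB p.
Proof.
case: p => w n Hp; rewrite DeltaPE epsR_Dsum.
transitivity (Dsum w (fun p q => if q is [::] then mkB (p, n) else 0)); last first.
  exact: (Dsum_counitR (fun p => mkB (p, n))).
apply: eq_Dsum_in => i Hi; rewrite epsR_tens eps_mkB; last exact: valid_drop.
by case: (drop i w) => [|? ?] /=; rewrite ?scale1r ?scale0r.
Qed.

Lemma mapT_Dsum (A B C D : choiceType) (f : {malg k[A]} -> {malg k[C]})
  (g : {malg k[B]} -> {malg k[D]}) s (G : seq nat -> seq nat -> {malg k[(A * B)%type]}) :
  mapT f g (Dsum s G) = Dsum s (fun a b => mapT f g (G a b)).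
Proof. exact: (@lin_Dsum k _ _ (mapT f g) s G (lin_linext _)). Qed.

Lemma reassoc_Dsum (A B C : choiceType) s (G : seq nat -> seq nat -> {malg k[(A * (B * C))%type]}) :
  reassoc (Dsum s G) = Dsum s (fun a b => @reassoc k A B C (G a b)).
Proof. exact: (@lin_Dsum k _ _ (@reassoc k A B C) s G (lin_linext _)). Qed.

Lemma tens_Dsuml (A B : choiceType) s (G : seq nat -> seq nat -> {malg k[A]}) (y : {malg k[B]}) :
  tens (Dsum s G) y = Dsum s (fun a b => tens (G a b : {malg k[A]}) y).
Proof. exact: (@lin_Dsum k _ _ (fun x => tens x y) s G (lin_tensl y)). Qed.

Lemma tens_Dsumr (A B : choiceType) s (G : seq nat -> seq nat -> {malg k[B]}) (x : {malg k[A]}) :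
  tens x (Dsum s G) = Dsum s (fun a b => tens x (G a b : {malg k[B]})).
Proof. exact: (@lin_Dsum k _ _ (fun y => tens x y) s G (lin_tensr x)). Qed.

Lemma coassocP p : validWn p ->
  mapT (@DeltaW k) id (DeltaP k p) = reassoc (mapT id (@DeltaW k) (DeltaP k p)).
Proof.
case: p => w n Hp; rewrite !DeltaPE mapT_Dsum mapT_Dsum reassoc_Dsum.
transitivity (Dsum w (fun p r => Dsum p (fun a b =>
   tens (tens (mkB (a, n)) (mkB (b, n))) (mkB (r, n))))).
  apply: eq_Dsum_in => i Hi.
  rewrite mapT_tens; [|exact: lin_Delta|exact: lin_id].
  by rewrite Delta_mkB ?DeltaPE ?tens_Dsuml //; apply: valid_take.
rewrite Dsum_coassoc; apply: eq_Dsum_in => i Hi.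
rewrite mapT_tens; [|exact: lin_id|exact: lin_Delta].
rewrite Delta_mkB ?DeltaPE ?tens_Dsumr ?reassoc_Dsum; last exact: valid_drop.
by apply: eq_Dsum => b c; rewrite reassoc_tens.
Qed.

Lemma valid0 : validWn ([::], 0%N). Proof. by []. Qed.
Lemma valid1 : validWn ([::], 1%N). Proof. by []. Qed.

Lemma iota1 : iotaW (1 : k) = mkB ([::], 0%N).
Proof. by rewrite /iotaW scale1r. Qed.

Lemma unitL_P q : validWn q -> nablaW (tens (mkB ([::], 0%N)) (mkB q)) = mkB q.
Proof.
case: q => w n Hq; rewrite nabla_mkB // mulPE sh0s big_seq1 shiftw0 add0n //.
Qed.

Lemma unitR_P p : validWn p -> nablaW (tens (mkB p) (mkB ([::], 0%N))) = mkB p.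
Proof.
case: p => w n Hp; rewrite nabla_mkB // mulPE shs0 big_seq1 addn0 //.
Qed.

Lemma mkB_coef p b : (mkB p)@_b = (val b == p)%:R.
Proof.
rewrite /Defs.mkB; case: insubP => [b' Hv <-|Hnv].
  by rewrite mcoeffU val_eqE eq_sym.
rewrite mcoeff0; case: eqP => // E; move: Hnv; rewrite -E; by rewrite (valP b).
Qed.

End Main3.
Section Main4.
Variable k : fieldType.
Local Notation W := (W k).
Local Notation W2 := (W2 k).
Local Notation mkB := (mkB k).

Lemma part_linear : structure_maps_linear k.
Proof.
split; first by move=> c X Y; exact: lin_nabla.
split; first by move=> c x y; exact: lin_Delta.
by move=> c x y; exact: lin_eps.
Qed.

Lemma DeltaU (b : Wbasis) : DeltaW (<< b >> : W) = DeltaP k (val b).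
Proof. by rewrite /DeltaW linextU1. Qed.

Lemma nablaUU (a b : Wbasis) : nablaW (tens (<< a >> : W) (<< b >> : W)) = mulB k a b.
Proof. by rewrite tensUU /nablaW linextU1. Qed.

Lemma part_algebra : is_algebra k.
Proof.
split.
  move=> T.
  apply: (@lin_eq k _ _ (fun T => nablaW (mapT (@nablaW k) id T))
     (fun T => nablaW (mapT id (@nablaW k) (linext (fun t : Wbasis * Wbasis * Wbasis =>
               << (t.1.1, (t.1.2, t.2)) >>) T)))).
  - exact: (lin_comp (@lin_nabla k) (lin_linext _)).
  - exact: (lin_comp (@lin_nabla k) (lin_comp (lin_linext _) (lin_linext _))).
  case=> [[a b] c].
  transitivity (nablaW (tens (mulB k a b) (<< c >> : W))).
    by rewrite /mapT linextU1 /= -nablaUU tensUU.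
  transitivity (nablaW (tens (<< a >> : W) (mulB k b c))); first exact: assocB.
  by rewrite linextU1 /mapT linextU1 /= -nablaUU tensUU.
move=> x; split.
  move: x; apply: (@lin_eq k _ _ (fun x => nablaW (tens (iotaW 1) x)) (fun x => x)).
  - exact: (lin_comp (@lin_nabla k) (lin_tensr _)).
  - exact: lin_id.
  by move=> b; rewrite iota1 -(mkB_val k b) unitL_P //; apply: valP.
move: x; apply: (@lin_eq k _ _ (fun x => nablaW (tens x (iotaW 1))) (fun x => x)).
- exact: (lin_comp (@lin_nabla k) (lin_tensl _)).
- exact: lin_id.
by move=> b; rewrite iota1 -(mkB_val k b) unitR_P //; apply: valP.
Qed.

Lemma part_coalg : is_coalgebra k.
Proof.
split.
  apply: (@lin_eq k _ _ (fun x => mapT (@DeltaW k) id (DeltaW x))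
     (fun x => reassoc (mapT id (@DeltaW k) (DeltaW x)))).
  - exact: (lin_comp (lin_linext _) (@lin_Delta k)).
  - exact: (lin_comp (lin_linext _) (lin_comp (lin_linext _) (@lin_Delta k))).
  by move=> b; rewrite DeltaU coassocP //; apply: valP.
move=> x; split.
  move: x; apply: (@lin_eq k _ _ (fun x => epsL (DeltaW x)) (fun x => x)).
  - exact: (lin_comp (lin_linext _) (@lin_Delta k)).
  - exact: lin_id.
  by move=> b; rewrite DeltaU epsL_DeltaP ?mkB_val //; apply: valP.
move: x; apply: (@lin_eq k _ _ (fun x => epsR (DeltaW x)) (fun x => x)).
- exact: (lin_comp (lin_linext _) (@lin_Delta k)).
- exact: lin_id.
by move=> b; rewrite DeltaU epsR_DeltaP ?mkB_val //; apply: valP.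
Qed.

Lemma part_compat : bialgebra_compat k.
Proof.
split.
  apply: (@bilin_eq k _ _ _ (fun x y => DeltaW (nablaW (tens x y)))
     (fun x y => mul2 (DeltaW x) (DeltaW y))).
  - by move=> y; exact: (lin_comp (@lin_Delta k) (lin_comp (@lin_nabla k) (lin_tensl y))).
  - by move=> x; exact: (lin_comp (@lin_Delta k) (lin_comp (@lin_nabla k) (lin_tensr x))).
  - by move=> y; exact: (lin_comp (lin_mul2l _) (@lin_Delta k)).
  - by move=> x; exact: (lin_comp (lin_mul2r _) (@lin_Delta k)).
  move=> a b; rewrite nablaUU mulBE.
  transitivity (mul2 (DeltaP k (val a)) (DeltaP k (val b))).
    by apply: Delta_mulP; apply: valP.
  by rewrite !DeltaU.
split; first by rewrite iota1 Delta_mkB // DeltaPE Dsum_nil.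
split; last by rewrite iota1 eps_mkB.
apply: (@bilin_eq k _ _ k^o (fun x y => epsW (nablaW (tens x y)))
     (fun x y => epsW x * epsW y)).
- by move=> y; exact: (lin_comp (V := k^o) (@lin_eps k) (lin_comp (@lin_nabla k) (lin_tensl y))).
- by move=> x; exact: (lin_comp (V := k^o) (@lin_eps k) (lin_comp (@lin_nabla k) (lin_tensr x))).
- by move=> y c x1 x2; rewrite epsD epsZ mulrDl -mulrA.
- by move=> x c y1 y2; rewrite epsD epsZ mulrDr mulrCA.
move=> a b; rewrite nablaUU mulBE eps_mulP; try exact: valP.
by rewrite !epsU.
Qed.

End Main4.
Section Supp.
Variables (k : fieldType) (A : choiceType).
Definition suppP (P : A -> Prop) (x : {malg k[A]}) := forall a, a \in msupp x -> P a.

Lemma suppP0 P : suppP P 0.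
Proof. by move=> a; rewrite msupp0 inE. Qed.

Lemma suppPD P x y : suppP P x -> suppP P y -> suppP P (x + y).
Proof. by move=> Hx Hy a /(fsubsetP (msuppD_le x y)); rewrite inE => /orP [/Hx|/Hy]. Qed.

Lemma suppPZ P c x : suppP P x -> suppP P (c *: x).
Proof. by move=> H a /(fsubsetP (msuppZ_le c x)) /H. Qed.

Lemma suppPU P a : P a -> suppP P << a >>.
Proof. by move=> H b /(fsubsetP msuppU_le); rewrite inE => /eqP ->. Qed.

Lemma suppP_sum P (I : eqType) (r : seq I) (Q : pred I) (F : I -> {malg k[A]}) :
  (forall i, i \in r -> suppP P (F i)) -> suppP P (\sum_(i <- r | Q i) F i).
Proof.
move=> H; rewrite big_seq_cond; apply: (big_ind (suppP P)); [exact: suppP0 | exact: suppPD |].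
by move=> i /andP[Hi _]; apply: H.
Qed.

Lemma suppP_linext P (B : choiceType) (h : B -> {malg k[A]}) (x : {malg k[B]}) :
  (forall b, b \in msupp x -> suppP P (h b)) -> suppP P (linext h x).
Proof.
move=> H; rewrite /linext big_seq_cond; apply: (big_ind (suppP P)); [exact: suppP0 | exact: suppPD |].
by move=> b /andP[Hb _]; apply: suppPZ; apply: H.
Qed.
End Supp.

Section Main5.
Variable k : fieldType.
Local Notation W := (W k).
Local Notation W2 := (W2 k).
Local Notation mkB := (mkB k).

Lemma homog_mkB s N : suppP (fun b : Wbasis => bdeg b = size s) (mkB (s, N)).
Proof.
rewrite /Defs.mkB; case: insubP => [b _ Hb | _]; last exact: suppP0.
by apply: suppPU; rewrite /bdeg /bword Hb.
Qed.

Lemma homog_mulP p q :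
  suppP (fun b : Wbasis => bdeg b = (size p.1 + size q.1)%N) (mulP k p q).
Proof.
case: p => u m; case: q => v n; rewrite mulPE; apply: suppP_sum => s Hs.
move=> b Hb; rewrite (homog_mkB Hb) /=.
by rewrite (perm_size (shuffle_perm Hs)) size_cat size_map.
Qed.

Lemma part_graded : graded_maps k.
Proof.
split.
  move=> i j x y Hx Hy.
  change (suppP (fun b => bdeg b = (i + j)%N) (nablaW (tens x y))).
  rewrite tensE (lin_linext_comp _ _ (@lin_nabla k)).
  apply: suppP_linext => a Ha.
  rewrite (lin_linext_comp _ _ (@lin_nabla k)).
  apply: suppP_linext => b Hb.
  rewrite /nablaW linextU1 /= mulBE.
  move=> c Hc; rewrite (homog_mulP Hc).
  by have := Hx a Ha; have := Hy b Hb; rewrite /bdeg /bword => -> ->.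
split.
  change (suppP (fun b => bdeg b = 0%N) (iotaW (1 : k))).
  by rewrite iota1; move=> b Hb; rewrite (homog_mkB Hb).
split.
  move=> d x Hx.
  change (suppP (fun p : Wbasis * Wbasis => (bdeg p.1 + bdeg p.2)%N = d) (DeltaW x)).
  apply: suppP_linext => b Hb; rewrite DeltaBE.
  case: b Hb => [[w n] Hv] Hb; rewrite DeltaPE /Dsum.
  apply: suppP_sum => i _; rewrite tensE.
  apply: suppP_linext => a Ha; apply: suppP_linext => c Hc; apply: suppPU => /=.
  rewrite (homog_mkB Ha) (homog_mkB Hc) -size_cat cat_take_drop.
  by have := Hx _ Hb.
move=> d x Hd Hx; rewrite /epsW big1_seq // => b /andP[_ Hb].
have := Hx b Hb; rewrite /bdeg; case: (bword b) => [|? ?] /=.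
  by move=> E; move: Hd; rewrite -E.
by rewrite mulr0.
Qed.

Definition b0 : Wbasis := exist _ ([::], 0%N) valid0.

Lemma coef_b0 (y : W) : (nablaW (tens y (mkB ([::], 1%N))))@_b0 = 0.
Proof.
pose b1 : Wbasis := exist _ ([::], 1%N) valid1.
have E : forall y : W, nablaW (tens y (<< b1 >> : W)) = linext (fun a => mulB k a b1) y.
  apply: (lin_eq (lin_comp (@lin_nabla k) (lin_tensl _)) (lin_linext _)) => a.
  by rewrite nablaUU linextU1.
rewrite (mkB_valid k valid1) -/b1.
rewrite E /linext.
apply: (big_ind (fun v : W => v@_b0 = 0)).
- by rewrite mcoeff0.
- by move=> u v Hu Hv; rewrite mcoeffD Hu Hv addr0.
move=> a _; rewrite mcoeffZ mulBE.
case: a => [[w n] Ha] /=.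
rewrite mulPE shs0 big_seq1 mkB_coef /= xpair_eqE addn1 andbF.
by rewrite mulr0.
Qed.

Lemma not_hopf : ~ is_hopf k.
Proof.
move=> [S HS].
pose x := mkB ([::], 1%N).
have [H1 _] := HS x.
have Dx : DeltaW x = tens x x by rewrite /x Delta_mkB // DeltaPE Dsum_nil.
have Mx : mapT S id (tens x x) = tens (S x) x.
  by rewrite /x (mkB_valid k valid1) tensUU /mapT linextU1; reflexivity.
move: H1; rewrite /conv Dx Mx => H1.
have := coef_b0 (S x); rewrite -/x H1 /iotaW mcoeffZ mkB_coef.
rewrite (_ : (val b0 == ([::], 0%N)) = true) // mulr1 /x eps_mkB //=.
by move/eqP; rewrite oner_eq0.
Qed.

End Main5.

Theorem theorem3p5 (k : fieldType) : is_graded_bialgebra k /\ ~ is_hopf k.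
Proof.
split; last exact: not_hopf.
split; first exact: part_linear.
split; first exact: part_algebra.
split; first exact: part_coalg.
split; first exact: part_compat.
exact: part_graded.
Qed.
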